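(* Let $F$ be a hyperfield and let $p$ be a polynomial over $F$ of degree $2$ or $3$. Then $p$ is irreducible if and only if $p$ has no root in $F$.
   Context: A hyperfield is a set $F$ with a commutative multiplication and a multivalued addition $\boxplus:F\times F\to\mathcal P(F)$ such that: there are unique $0,1\in F$ with $(F,\cdot,1)$ a commutative monoid and $F\setminus\{0\}$ a group; $ab\boxplus ac=\{ad: d\in b\boxplus c\}$; and $(F,\boxplus,0)$ is a commutative hypergroup (with additive inverses $-a$, $0\in a\boxplus(-a)$). Iterated sums: $\boxplus_{i=1}^n a_i=\bigcup_{b\in\boxplus_{i=1}^{n-1}a_i} b\boxplus a_n$. A polynomial over $F$ is a finitely supported sequence $(c_i)$ in $F$, written $\sum c_iT^i$, with degree the largest $k$ with $c_k\ne0$. Hyperproduct: $p\boxdot q=\{\sum e_iT^i : e_i\in \boxplus_{k+l=i} c_kd_l\}$. $p\sim q$ means $p\in a\boxdot q$ for some nonzero $a\in F$; $p$ is irreducible if $\deg p\ge1$ and $p\in q_1\boxdot q_2$ implies $p\sim q_1$ or $p\sim q_2$. An element $a\in F$ is a root of $p=\sum c_iT^i$ if $0\in\boxplus_i c_ia^i$. (Known fact used freely: $a$ is a root of $p$ iff $p\in(T-a)\boxdot q$ for some polynomial $q$.) *)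

(* Defs.v *)
From Stdlib Require Import List Arith.
Import ListNotations.
Set Implicit Arguments.

(* A hyperfield.  [hadd a b x] means  x \in a ⊞ b. *)
Record Hyperfield := {
  car :> Type;
  hzero : car;
  hone : car;
  hmul : car -> car -> car;
  hadd : car -> car -> car -> Prop;
  hneg : car -> car;
  hmul_comm : forall a b, hmul a b = hmul b a;
  hmul_assoc : forall a b c, hmul a (hmul b c) = hmul (hmul a b) c;
  hmul_1l : forall a, hmul hone a = a;
  hmul_0l : forall a, hmul hzero a = hzero;
  hzero_neq_one : hzero <> hone;
  hmul_inv : forall a, a <> hzero -> exists b, hmul a b = hone;
  hdistr : forall a b c x,
      hadd (hmul a b) (hmul a c) x <-> exists d, hadd b c d /\ x = hmul a d;
  hadd_nonempty : forall a b, exists x, hadd a b x;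
  hadd_comm : forall a b x, hadd a b x <-> hadd b a x;
  hadd_assoc : forall a b c x,
      (exists y, hadd a b y /\ hadd y c x) <-> (exists y, hadd b c y /\ hadd a y x);
  hadd_0r : forall a x, hadd a hzero x <-> x = a;
  hadd_neg : forall a, hadd a (hneg a) hzero;
  hneg_unique : forall a b, hadd a b hzero -> b = hneg a;
  hadd_reversible : forall a b c, hadd a b c -> hadd c (hneg b) a
}.

Section Hyper.
Variable F : Hyperfield.

Fixpoint hpow (a : F) (n : nat) : F :=
  match n with 0 => hone F | S m => hmul F (hpow a m) a end.

Fixpoint hsum_aux (S : F -> Prop) (l : list F) : F -> Prop :=
  match l with
  | [] => S
  | a :: l' => hsum_aux (fun x => exists b, S b /\ hadd F b a x) l'
  end.

Definition hsum (l : list F) : F -> Prop :=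
  match l with
  | [] => fun x => x = hzero F
  | a :: l' => hsum_aux (fun x => x = a) l'
  end.

Record hpoly := HPoly {
  coef : nat -> F;
  coef_fin : exists N, forall i, N <= i -> coef i = hzero F
}.

Definition has_degree (p : hpoly) (k : nat) : Prop :=
  coef p k <> hzero F /\ forall i, k < i -> coef p i = hzero F.

Definition in_hprod (e p q : hpoly) : Prop :=
  forall i, hsum (map (fun k => hmul F (coef p k) (coef q (i - k))) (seq 0 (S i)))
                 (coef e i).

Definition hconst (a : F) : hpoly.
Proof.
  refine (HPoly (fun i => match i with 0 => a | _ => hzero F end) _).
  exists 1; intros [|i] H; [inversion H | reflexivity].
Defined.

Definition hassoc (p q : hpoly) : Prop :=
  exists a, a <> hzero F /\ in_hprod p (hconst a) q.

Definition hirreducible (p : hpoly) : Prop :=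
  (exists k, 1 <= k /\ has_degree p k) /\
  forall q1 q2 : hpoly, in_hprod p q1 q2 -> hassoc p q1 \/ hassoc p q2.

Definition is_root (p : hpoly) (a : F) : Prop :=
  exists N, (forall i, N <= i -> coef p i = hzero F) /\
    hsum (map (fun i => hmul F (coef p i) (hpow a i)) (seq 0 N)) (hzero F).

End Hyper.

(* Main.v *)
Require Import Defs.
From Stdlib Require Import List Arith Lia Classical.
Import ListNotations.

Lemma mul_1r (F : Hyperfield) (a : F) : hmul F a (hone F) = a.
Proof. rewrite hmul_comm; apply hmul_1l. Qed.
Lemma mul_0r (F : Hyperfield) (a : F) : hmul F a (hzero F) = hzero F.
Proof. rewrite hmul_comm; apply hmul_0l. Qed.
Lemma add_0l (F : Hyperfield) (a x : F) : hadd F (hzero F) a x <-> x = a.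
Proof. rewrite hadd_comm; apply hadd_0r. Qed.
Lemma neg0 (F : Hyperfield) : hneg F (hzero F) = hzero F.
Proof. symmetry; apply hneg_unique. apply hadd_0r; reflexivity. Qed.
Lemma negneg (F : Hyperfield) (a : F) : hneg F (hneg F a) = a.
Proof. symmetry; apply hneg_unique. apply hadd_comm, hadd_neg. Qed.
Lemma mul_negr (F : Hyperfield) (a b : F) : hmul F a (hneg F b) = hneg F (hmul F a b).
Proof. apply hneg_unique. apply hdistr. exists (hzero F). split; [apply hadd_neg|].
  symmetry; apply mul_0r. Qed.
Lemma mul_negl (F : Hyperfield) (a b : F) : hmul F (hneg F a) b = hneg F (hmul F a b).
Proof. rewrite (hmul_comm F _ b), (hmul_comm F a b). apply mul_negr. Qed.
Lemma mul_nz (F : Hyperfield) (a b : F) : a <> hzero F -> b <> hzero F -> hmul F a b <> hzero F.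
Proof. intros Ha Hb E. destruct (hmul_inv F Ha) as [c Hc]. apply Hb.
  rewrite <- (hmul_1l F b), <- Hc, (hmul_comm F a c), <- hmul_assoc, E. apply mul_0r. Qed.
Lemma scale (F : Hyperfield) (c x y z : F) : hadd F x y z -> hadd F (hmul F c x) (hmul F c y) (hmul F c z).
Proof. intros H. apply hdistr. exists z; auto. Qed.

Lemma hsum_aux_ext (F : Hyperfield) (l : list F) : forall (S S' : F -> Prop),
  (forall x, S x <-> S' x) -> forall x, hsum_aux F S l x <-> hsum_aux F S' l x.
Proof. induction l as [|a l IH]; intros S S' H x; simpl; auto.
  apply IH. intros y. split; intros [b [Hb1 Hb2]]; exists b; split; auto; apply H; auto. Qed.

Lemma hsum_aux_app (F : Hyperfield) (l1 l2 : list F) : forall (S : F -> Prop),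
  hsum_aux F S (l1 ++ l2) = hsum_aux F (hsum_aux F S l1) l2.
Proof. induction l1 as [|a l IH]; intros S; simpl; auto. Qed.

Lemma hsum_aux_zeros (F : Hyperfield) (l : list F) : Forall (fun y => y = hzero F) l ->
  forall S x, hsum_aux F S l x <-> S x.
Proof. induction 1 as [|a l Ha Hl IH]; intros S x; simpl; [tauto|].
  rewrite IH. subst a. split.
  - intros [b [Hb1 Hb2]]. apply hadd_0r in Hb2. subst; auto.
  - intros Hx. exists x. split; auto. apply hadd_0r; auto. Qed.

Lemma hsum_aux_zero_start (F : Hyperfield) (l : list F) x :
  hsum_aux F (fun x => x = hzero F) l x <-> hsum F l x.
Proof. destruct l as [|a l]; simpl; [tauto|]. apply hsum_aux_ext.
  intros y. split.
  - intros [b [-> Hb]]. apply add_0l in Hb; auto.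
  - intros ->. exists (hzero F). split; auto. apply add_0l; auto. Qed.

Lemma hsum_prefix0 (F : Hyperfield) (l1 l2 : list F) x : Forall (fun y => y = hzero F) l1 ->
  hsum F (l1 ++ l2) x <-> hsum F l2 x.
Proof. intros H; revert x; induction H as [|a l Ha Hl IH]; intros x; simpl; [tauto|].
  subst a. rewrite hsum_aux_zero_start. apply IH. Qed.

Lemma hsum_suffix0 (F : Hyperfield) (l1 l2 : list F) x : Forall (fun y => y = hzero F) l2 ->
  hsum F (l1 ++ l2) x <-> hsum F l1 x.
Proof. intros H. destruct l1 as [|a l1]; simpl.
  - destruct H as [|b l Hb Hl]; simpl; [tauto|]. subst b.
    rewrite hsum_aux_zeros; auto. tauto.
  - rewrite hsum_aux_app. apply hsum_aux_zeros; auto. Qed.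

Lemma hsum1 (F : Hyperfield) (a x : F) : hsum F [a] x <-> x = a.
Proof. simpl. tauto. Qed.
Lemma hsum2 (F : Hyperfield) (a b x : F) : hsum F [a; b] x <-> hadd F a b x.
Proof. simpl. split; [intros [c [-> H]]; auto | intros H; exists a; auto]. Qed.

Lemma lin_coef (F : Hyperfield) (f r : hpoly F) : (forall k, 2 <= k -> coef f k = hzero F) ->
  forall i x, hsum F (map (fun k => hmul F (coef f k) (coef r (S i - k))) (seq 0 (S (S i)))) x <->
  hadd F (hmul F (coef f 0) (coef r (S i))) (hmul F (coef f 1) (coef r i)) x.
Proof. intros Hf i x.
  change (seq 0 (S (S i))) with ([0;1] ++ seq 2 i). rewrite map_app, hsum_suffix0.
  - simpl. rewrite Nat.sub_0_r. apply hsum2.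
  - apply Forall_forall. intros y Hy. apply in_map_iff in Hy. destruct Hy as [k [<- Hk]].
    apply in_seq in Hk. rewrite Hf by lia. apply hmul_0l. Qed.

Lemma lin_prod (F : Hyperfield) (p f r : hpoly F) : (forall k, 2 <= k -> coef f k = hzero F) ->
  (in_hprod p f r <-> coef p 0 = hmul F (coef f 0) (coef r 0) /\
    forall i, hadd F (hmul F (coef f 0) (coef r (S i))) (hmul F (coef f 1) (coef r i)) (coef p (S i))).
Proof. intros Hf. unfold in_hprod. split.
  - intros H. split.
    + specialize (H 0). simpl in H. exact H.
    + intros i. apply (lin_coef _ _ _ Hf). apply H.
  - intros [H0 HS] [|i].
    + simpl. exact H0.
    + apply (lin_coef _ _ _ Hf). apply HS. Qed.

Lemma linR_prod (F : Hyperfield) (p f r : hpoly F) : (forall k, 2 <= k -> coef f k = hzero F) ->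
  in_hprod p r f -> coef p 0 = hmul F (coef f 0) (coef r 0) /\
    forall i, hadd F (hmul F (coef f 0) (coef r (S i))) (hmul F (coef f 1) (coef r i)) (coef p (S i)).
Proof. intros Hf H. unfold in_hprod in H. split.
  - specialize (H 0). simpl in H. rewrite H. apply hmul_comm.
  - intros i. specialize (H (S i)).
    replace (S (S i)) with (i + 2) in H by lia. rewrite seq_app, map_app, hsum_prefix0 in H.
    + change (seq (0+i) 2) with [i; S i] in H. cbn [map] in H. replace (S i - i) with 1 in H by lia. rewrite Nat.sub_diag in H.
      apply hsum2 in H. apply hadd_comm. rewrite (hmul_comm F (coef f 0)), (hmul_comm F (coef f 1)). exact H.
    + apply Forall_forall. intros y Hy. apply in_map_iff in Hy. destruct Hy as [k [<- Hk]].
      apply in_seq in Hk. rewrite Hf by lia. apply mul_0r. Qed.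

Lemma deg_exists (F : Hyperfield) (q : hpoly F) :
  (exists d, has_degree q d) \/ (forall i, coef q i = hzero F).
Proof. destruct (coef_fin q) as [N HN]. revert HN. induction N as [|m IH]; intros HN.
  - right. intros i. apply HN. lia.
  - destruct (classic (coef q m = hzero F)) as [Hm|Hm].
    + apply IH. intros i Hi. destruct (Nat.eq_dec i m) as [E|E]. { subst; auto. } { apply HN; lia. }
    + left. exists m. split; [exact Hm|]. intros i Hi. apply HN; lia. Qed.

Lemma deg_unique (F : Hyperfield) (q : hpoly F) d d' : has_degree q d -> has_degree q d' -> d = d'.
Proof. intros [H1 H2] [H1' H2']. destruct (Nat.lt_trichotomy d d') as [H|[H|H]]; auto.
  - exfalso; apply H1'; auto.
  - exfalso; apply H1; auto. Qed.

Lemma forall_zero_map (F : Hyperfield) (g : nat -> F) s :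
  (forall k, In k s -> g k = hzero F) -> Forall (fun y => y = hzero F) (map g s).
Proof. intros H. apply Forall_forall. intros y Hy. apply in_map_iff in Hy.
  destruct Hy as [k [<- Hk]]. auto. Qed.

Lemma prod_zero (F : Hyperfield) (p q1 q2 : hpoly F) : in_hprod p q1 q2 ->
  ((forall i, coef q1 i = hzero F) \/ (forall i, coef q2 i = hzero F)) -> forall i, coef p i = hzero F.
Proof. intros H Hz i. specialize (H i). set (l := map _ _) in H.
  assert (Hl : Forall (fun y => y = hzero F) l).
  { apply forall_zero_map. intros k _. destruct Hz as [Hz|Hz]; rewrite Hz;
    [apply hmul_0l | apply mul_0r]. }
  apply (proj1 (hsum_prefix0 F l [] (coef p i) Hl)). rewrite app_nil_r. exact H. Qed.

Lemma single_coef (F : Hyperfield) (p q1 q2 : hpoly F) d1 d2 : in_hprod p q1 q2 ->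
  has_degree q1 d1 -> has_degree q2 d2 -> forall m, d1 + d2 <= m ->
  coef p m = hmul F (coef q1 d1) (coef q2 (m - d1)).
Proof. intros H [_ H1] [_ H2] m Hm. specialize (H m).
  replace (S m) with (d1 + S (m - d1)) in H by lia. rewrite seq_app, map_app, hsum_prefix0 in H.
  - change (seq (0 + d1) (S (m - d1))) with ([d1] ++ seq (S d1) (m - d1)) in H.
    rewrite map_app, hsum_suffix0 in H.
    + simpl in H. exact H.
    + apply forall_zero_map. intros k Hk. apply in_seq in Hk. rewrite H1 by lia. apply hmul_0l.
  - apply forall_zero_map. intros k Hk. apply in_seq in Hk. rewrite (H2 (m - k)) by lia. apply mul_0r. Qed.

Lemma deg_add (F : Hyperfield) (p q1 q2 : hpoly F) d1 d2 : in_hprod p q1 q2 ->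
  has_degree q1 d1 -> has_degree q2 d2 -> has_degree p (d1 + d2).
Proof. intros H D1 D2. split.
  - rewrite (single_coef _ _ _ _ _ _ H D1 D2) by lia. replace (d1 + d2 - d1) with d2 by lia.
    apply mul_nz; [apply D1|apply D2].
  - intros i Hi. rewrite (single_coef _ _ _ _ _ _ H D1 D2) by lia. destruct D2 as [_ D2]. rewrite D2 by lia.
    apply mul_0r. Qed.

Lemma root_of_lin (F : Hyperfield) (p : hpoly F) (f0 f1 : F) (r : nat -> F) :
  f1 <> hzero F -> coef p 0 = hmul F f0 (r 0) ->
  (forall i, hadd F (hmul F f0 (r (S i))) (hmul F f1 (r i)) (coef p (S i))) ->
  (forall j, 3 <= j -> r j = hzero F) -> (forall j, 4 <= j -> coef p j = hzero F) ->
  exists a, is_root p a.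
Proof. intros Hf1 H0 HS Hr Hp.
  destruct (hmul_inv F Hf1) as [b Hb].
  set (a := hmul F (hneg F f0) b).
  assert (Haf : hmul F a f1 = hneg F f0).
  { unfold a. rewrite <- hmul_assoc, (hmul_comm F b f1), Hb. apply mul_1r. }
  set (T := fun i => hmul F (hmul F f0 (r i)) (hpow F a i)).
  set (u := fun i => hmul F (coef p i) (hpow F a i)).
  assert (step : forall i, hadd F (T i) (u (S i)) (T (S i))).
  { intros i. pose proof (scale F (hpow F a (S i)) _ _ _ (HS i)) as H.
    assert (E : hmul F (hpow F a (S i)) (hmul F f1 (r i)) = hneg F (T i)).
    { unfold T. simpl hpow.
      rewrite <- (hmul_assoc F (hpow F a i) a (hmul F f1 (r i))), (hmul_assoc F a f1 (r i)), Haf,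
        mul_negl, mul_negr. f_equal. apply hmul_comm. }
    rewrite E in H. apply hadd_reversible in H. rewrite negneg in H. apply hadd_comm.
    unfold u, T. rewrite (hmul_comm F (coef p (S i))), (hmul_comm F (hmul F f0 (r (S i)))). exact H. }
  exists a, 4. split; [exact Hp|].
  change (map (fun i => hmul F (coef p i) (hpow F a i)) (seq 0 4)) with [u 0; u 1; u 2; u 3].
  cbn [hsum hsum_aux]. exists (T 2). split.
  - exists (T 1). split; [|apply step]. exists (T 0). split; [|apply step].
    unfold T, u. simpl hpow. rewrite !mul_1r. symmetry; exact H0.
  - assert (T3 : T 3 = hzero F).
    { unfold T. rewrite Hr by lia. rewrite mul_0r. apply hmul_0l. }
    rewrite <- T3. apply step. Qed.

Lemma hconst_hi (F : Hyperfield) (c : F) : forall k, 1 <= k -> coef (hconst F c) k = hzero F.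
Proof. intros [|k] Hk; [lia|reflexivity]. Qed.

Lemma hassoc_of (F : Hyperfield) (p r : hpoly F) (c : F) : c <> hzero F ->
  coef p 0 = hmul F c (coef r 0) ->
  (forall i, hadd F (hmul F c (coef r (S i))) (hzero F) (coef p (S i))) -> hassoc p r.
Proof. intros Hc H0 HS. exists c. split; [exact Hc|].
  apply lin_prod. { intros k Hk. apply hconst_hi. lia. }
  split; [exact H0|]. intros i. cbn [coef hconst]. rewrite hmul_0l. apply HS. Qed.

Lemma irr_of_noroot (F : Hyperfield) (p : hpoly F) n : 2 <= n <= 3 -> has_degree p n ->
  ~ (exists a, is_root p a) -> hirreducible p.
Proof. intros Hn Dp Hnr. split; [exists n; split; [lia|exact Dp]|].
  intros q1 q2 H.
  assert (Hpn : coef p n <> hzero F) by apply Dp.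
  destruct (deg_exists _ q1) as [[d1 D1]|Z1];
    [|exfalso; apply Hpn; apply (prod_zero _ _ _ _ H); auto].
  destruct (deg_exists _ q2) as [[d2 D2]|Z2];
    [|exfalso; apply Hpn; apply (prod_zero _ _ _ _ H); auto].
  pose proof (deg_unique _ _ _ _ (deg_add _ _ _ _ _ _ H D1 D2) Dp) as Hd.
  assert (Hp4 : forall j, 4 <= j -> coef p j = hzero F) by (intros j Hj; apply Dp; lia).
  destruct D1 as [L1 Z1]. destruct D2 as [L2 Z2].
  destruct (Nat.eq_dec d1 0) as [E1|E1].
  - right. subst d1. apply lin_prod in H; [|intros k Hk; apply Z1; lia].
    destruct H as [H0 HS]. apply (hassoc_of _ _ _ (coef q1 0)); auto.
    intros i. specialize (HS i). rewrite (Z1 1), hmul_0l in HS by lia. exact HS.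
  - destruct (Nat.eq_dec d2 0) as [E2|E2].
    + left. subst d2. apply linR_prod in H; [|intros k Hk; apply Z2; lia].
      destruct H as [H0 HS]. apply (hassoc_of _ _ _ (coef q2 0)); auto.
      intros i. specialize (HS i). rewrite (Z2 1), hmul_0l in HS by lia. exact HS.
    + exfalso. apply Hnr. destruct (Nat.eq_dec d1 1) as [E3|E3].
      * subst d1. apply lin_prod in H; [|intros k Hk; apply Z1; lia].
        destruct H as [H0 HS]. apply (root_of_lin _ _ _ _ (coef q2) L1 H0 HS); auto.
        intros j Hj. apply Z2. lia.
      * assert (d2 = 1) by lia. subst d2. apply linR_prod in H; [|intros k Hk; apply Z2; lia].
        destruct H as [H0 HS]. apply (root_of_lin _ _ _ _ (coef q1) L2 H0 HS); auto.
        intros j Hj. apply Z1. lia. Qed.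

Lemma hsum_seq_extend (F : Hyperfield) (g : nat -> F) B : (forall i, B <= i -> g i = hzero F) ->
  forall K x, hsum F (map g (seq 0 (B + K))) x <-> hsum F (map g (seq 0 B)) x.
Proof. intros H K x. rewrite seq_app, map_app. apply hsum_suffix0.
  apply forall_zero_map. intros k Hk. apply in_seq in Hk. apply H. lia. Qed.

Lemma root4 (F : Hyperfield) (p : hpoly F) (a : F) : (forall j, 4 <= j -> coef p j = hzero F) ->
  is_root p a -> exists s1 s2,
    hadd F (hmul F (coef p 0) (hpow F a 0)) (hmul F (coef p 1) (hpow F a 1)) s1 /\
    hadd F s1 (hmul F (coef p 2) (hpow F a 2)) s2 /\
    hadd F s2 (hmul F (coef p 3) (hpow F a 3)) (hzero F).
Proof. intros H4 [N [HN Hs]].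
  set (g := fun i => hmul F (coef p i) (hpow F a i)) in Hs.
  assert (Hs4 : hsum F (map g (seq 0 4)) (hzero F)).
  { apply (proj1 (hsum_seq_extend F g 4 ltac:(intros i Hi; unfold g; rewrite H4 by lia; apply hmul_0l) N _)).
    rewrite Nat.add_comm. apply (hsum_seq_extend F g N ltac:(intros i Hi; unfold g; rewrite HN by lia; apply hmul_0l) 4 _).
    exact Hs. }
  cbn [seq map hsum hsum_aux] in Hs4. destruct Hs4 as [s2 [[s1 [[b [Eb Hb]] H1]] H2]]. subst b.
  exists s1, s2. unfold g in *. auto. Qed.

Definition linpoly (F : Hyperfield) (a : F) : hpoly F.
Proof.
  refine (HPoly F (fun i => match i with 0 => hneg F a | 1 => hone F | _ => hzero F end) _).
  exists 2; intros [|[|i]] H; [lia|lia|reflexivity].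
Defined.

Definition mkpoly (F : Hyperfield) (d : nat -> F) (H : forall k, 3 <= k -> d k = hzero F) : hpoly F :=
  HPoly F d (ex_intro _ 3 H).

Lemma linpoly_hi (F : Hyperfield) (a : F) : forall k, 2 <= k -> coef (linpoly F a) k = hzero F.
Proof. intros [|[|k]] Hk; [lia|lia|reflexivity]. Qed.

Lemma powinv (F : Hyperfield) (a ia : F) : hmul F a ia = hone F ->
  forall k, hmul F (hpow F a k) (hpow F ia k) = hone F.
Proof. intros H k. induction k as [|k IH]; simpl.
  - apply hmul_1l.
  - rewrite <- hmul_assoc, (hmul_comm F a), <- (hmul_assoc F (hpow F ia k) ia a), (hmul_comm F ia a), H, mul_1r. exact IH. Qed.

Lemma scaler (F : Hyperfield) (c x y z : F) : hadd F x y z -> hadd F (hmul F x c) (hmul F y c) (hmul F z c).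
Proof. intros H. rewrite !(hmul_comm F _ c). apply scale; auto. Qed.

Lemma factor_of_root (F : Hyperfield) (p : hpoly F) (a : F) :
  (forall j, 4 <= j -> coef p j = hzero F) -> is_root p a ->
  exists q : hpoly F, in_hprod p (linpoly F a) q /\ (forall k, 3 <= k -> coef q k = hzero F) /\
    (coef p 3 = hzero F -> coef q 2 = hzero F).
Proof. intros H4 Hr. destruct (root4 _ _ _ H4 Hr) as [s1 [s2 [E1 [E2 E3]]]].
  set (u := fun i => hmul F (coef p i) (hpow F a i)).
  destruct (classic (a = hzero F)) as [Ha|Ha].
  -
    assert (Hu : forall k, hpow F a (S k) = hzero F).
    { intros k. simpl. rewrite Ha. apply mul_0r. }
    rewrite !Hu, !mul_0r in *. simpl hpow in E1. rewrite mul_1r in E1.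
    apply hadd_0r in E1, E2, E3. subst.
    assert (Hq : forall k, 3 <= k -> coef p (S k) = hzero F) by (intros k Hk; apply H4; lia).
    exists (mkpoly F (fun k => coef p (S k)) Hq). split; [|split].
    + apply lin_prod; [apply linpoly_hi|]. cbn [coef linpoly mkpoly]. split.
      * rewrite <- E3, neg0, hmul_0l. reflexivity.
      * intros i. rewrite neg0, hmul_0l, hmul_1l. apply add_0l. reflexivity.
    + exact Hq.
    + cbn [coef mkpoly]. auto.
  - destruct (hmul_inv F Ha) as [ia Hia].
    set (s := fun i => match i with 0 => u 0 | 1 => s1 | 2 => s2 | _ => hzero F end).
    set (d := fun k => hmul F (hneg F (s k)) (hpow F ia (S k))).
    assert (Hd : forall k, 3 <= k -> d k = hzero F).
    { intros [|[|[|k]]] Hk; try lia. unfold d. cbn [s]. rewrite neg0. apply hmul_0l. }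
    assert (Hs : forall i, hadd F (s i) (u (S i)) (s (S i))).
    { intros [|[|[|i]]]; cbn [s]; auto. unfold u. rewrite H4 by lia. rewrite hmul_0l.
      apply hadd_0r; reflexivity. }
    exists (mkpoly F d Hd). split; [|split].
    + apply lin_prod; [apply linpoly_hi|]. cbn [coef linpoly mkpoly]. split.
      * unfold d. rewrite mul_negl, mul_negl, mul_negr, negneg. cbn [s hpow]. unfold u.
        rewrite hmul_1l. cbn [hpow]. rewrite mul_1r, (hmul_comm F a), <- hmul_assoc, (hmul_comm F ia a), Hia, mul_1r. reflexivity.
      * intros i. specialize (Hs i). apply hadd_comm, hadd_reversible in Hs.
        apply (scaler F (hpow F ia (S i))) in Hs.
        assert (EA : hmul F (hneg F a) (d (S i)) = hmul F (s (S i)) (hpow F ia (S i))).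
        { unfold d. rewrite mul_negl, mul_negl, mul_negr, negneg. cbn [hpow].
          rewrite (hmul_comm F (s (S i))), hmul_assoc, (hmul_comm F a), <- (hmul_assoc F _ ia a),
            (hmul_comm F ia a), Hia, mul_1r. apply hmul_comm. }
        assert (EP : coef p (S i) = hmul F (u (S i)) (hpow F ia (S i))).
        { unfold u. rewrite <- hmul_assoc, powinv, mul_1r; auto. }
        rewrite EA, hmul_1l, EP. unfold d. exact Hs.
    + exact Hd.
    + intros H3. cbn [coef mkpoly]. unfold d. cbn [s].
      rewrite H3, hmul_0l in E3. apply hadd_0r in E3. subst s2. rewrite neg0. apply hmul_0l.
Qed.

Lemma assoc_zero (F : Hyperfield) (p r : hpoly F) m : hassoc p r -> coef r (S m) = hzero F ->
  coef p (S m) = hzero F.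
Proof. intros [c [Hc H]] Hr. apply lin_prod in H; [|intros k Hk; apply hconst_hi; lia].
  destruct H as [_ HS]. specialize (HS m). rewrite Hr, mul_0r in HS. cbn [coef hconst] in HS.
  rewrite hmul_0l in HS. apply hadd_0r in HS. exact HS. Qed.

Theorem mainTheorem4 (F : Hyperfield) (p : hpoly F) :
  (has_degree p 2 \/ has_degree p 3) ->
  (hirreducible p <-> ~ (exists a : F, is_root p a)).
Proof. intros Hd.
  assert (Hex : exists n, 2 <= n <= 3 /\ has_degree p n)
    by (destruct Hd as [D|D]; [exists 2|exists 3]; split; auto; lia).
  destruct Hex as [n [Hn Dp]]. split.
  - intros Hirr [a Ha].
    assert (H4 : forall j, 4 <= j -> coef p j = hzero F) by (intros j Hj; apply Dp; lia).
    destruct (factor_of_root _ _ _ H4 Ha) as [q [Hpq [Hq3 Hq2]]].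
    assert (Hpn : coef p n <> hzero F) by apply Dp.
    destruct n as [|m]; [lia|].
    destruct (proj2 Hirr _ _ Hpq) as [Hs|Hs]; apply Hpn; apply (assoc_zero _ _ _ _ Hs).
    + apply linpoly_hi. lia.
    + destruct (Nat.eq_dec m 1) as [->|E].
      * apply Hq2. apply Dp. lia.
      * apply Hq3. lia.
  - apply (irr_of_noroot _ _ n Hn Dp).
Qed.
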